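(* Let $M$ be a finitely generated $\mathbb{Z}[\sigma]$-submodule of $\mathbb{Q}[\sigma]$, and let $\tilde M$ be the union of all $\mathbb{Z}[\sigma]$-submodules $N$ of $\mathbb{Q}[\sigma]$ with $M\subseteq N$ and $N/M$ finite. Then $\tilde M$ is generated by one element as a $\mathbb{Z}[\sigma]$-module.
   Context: $\mathbb{Q}[\sigma]$ is the polynomial ring over $\mathbb{Q}$ in an indeterminate $\sigma$, viewed as a module over $\mathbb{Z}[\sigma]$ by multiplication. *)

(* Defs.v *)
From HB Require Import structures.
From mathcomp Require Import all_boot all_order all_algebra.
Set Implicit Arguments. Unset Strict Implicit. Unset Printing Implicit Defensive.
Import Order.TTheory GRing.Theory Num.Theory.
Local Open Scope ring_scope.

(* Q[sigma] = {poly rat}; Z[sigma] = {poly int}, acting on Q[sigma] by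
   multiplication after the canonical embedding Z[sigma] -> Q[sigma]. *)
Definition zact (a : {poly int}) (p : {poly rat}) : {poly rat} :=
  map_poly (fun z : int => z%:~R) a * p.

Definition is_zsubmodule (N : {poly rat} -> Prop) : Prop :=
  [/\ N 0,
      (forall x y, N x -> N y -> N (x + y)) &
      (forall (a : {poly int}) x, N x -> N (zact a x))].

Definition zspan (s : seq {poly rat}) (p : {poly rat}) : Prop :=
  exists c : 'I_(size s) -> {poly int}, p = \sum_(i < size s) zact (c i) s`_i.

Definition zfinitely_generated (M : {poly rat} -> Prop) : Prop :=
  exists s : seq {poly rat}, forall p, M p <-> zspan s p.

Definition finite_quotient (M N : {poly rat} -> Prop) : Prop :=
  exists r : seq {poly rat}, forall n, N n -> exists2 x, x \in r & M (n - x).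

Definition saturation (M : {poly rat} -> Prop) (p : {poly rat}) : Prop :=
  exists N : {poly rat} -> Prop,
    [/\ is_zsubmodule N, (forall x, M x -> N x), finite_quotient M N & N p].

Definition zcyclic (N : {poly rat} -> Prop) : Prop :=
  exists g : {poly rat}, forall p, N p <-> exists a : {poly int}, p = zact a g.

(* Main.v *)
Require Import Defs.
From HB Require Import structures.
From mathcomp Require Import all_boot all_order all_algebra.
From mathcomp Require Import ring lra zify.
From Stdlib Require Import Classical ClassicalEpsilon.
Set Implicit Arguments. Unset Strict Implicit. Unset Printing Implicit Defensive.
Import Order.TTheory GRing.Theory Num.Theory.
Local Open Scope ring_scope.

Notation iota_ := (map_poly (fun z : int => z%:~R) : {poly int} -> {poly rat}).
Notation PC n := (((n : nat)%:Z)%:P : {poly int}).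

Definition is_ideal (J : {poly int} -> Prop) : Prop :=
  [/\ J 0, (forall x y, J x -> J y -> J (x + y)) & (forall a x, J x -> J (a * x))].
Lemma L1 J (p : nat) : is_ideal J -> prime p -> forall f : {poly int},
  (exists i, ~~ (p%:Z %| f`_i)%Z) -> (exists G, J (f - PC p * G)) ->
  exists F G, F \is monic /\ J (F - PC p * G).
Proof.
move=> [J0 JD JM] pp f.
elim: {f}(size f) {-2}f (leqnn (size f)) => [|n IH] f szf [i ndi] [G0 HG0].
  move: szf; rewrite size_poly_leq0 => /eqP f0.
  by move: ndi; rewrite f0 coef0 dvdz0.
have fi0 : f`_i != 0 by apply: contraNneq ndi => ->; rewrite dvdz0.
have ilt : (i < size f)%N by rewrite ltnNge; apply: contra fi0 => h; rewrite nth_default.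
set d := (size f).-1.
set l := lead_coef f.
have hd : size f = d.+1 by rewrite /d prednK //; case: (size f) ilt.
have szl : (size (f - l%:P * 'X^d)%R <= d)%N.
  apply/leq_sizeP => j hj; rewrite coefB coefCM coefXn.
  case: (ltngtP j d) => hjd; first by move: hj; rewrite leqNgt hjd.
    by rewrite mulr0 subr0 nth_default // hd.
  by rewrite hjd mulr1 /l lead_coefE -/d subrr.
case: (boolP (p%:Z %| l)%Z) => hl.
  have le : l = (l %/ p%:Z)%Z * p%:Z by rewrite divzK.
  have : exists i, ~~ (p%:Z %| (f - l%:P * 'X^d)`_i)%Z.
    exists i; rewrite coefB coefCM coefXn.
    case: (eqVneq i d) => hid; first by move: ndi; rewrite hid /l lead_coefE -/d hl.
    by rewrite mulr0 subr0.
  move=> /(IH (f - l%:P * 'X^d)); apply.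
    by apply: (leq_trans szl); rewrite -ltnS -hd.
  exists (G0 - (l %/ p%:Z)%Z%:P * 'X^d).
  have -> : f - l%:P * 'X^d - PC p * (G0 - (l %/ p%:Z)%Z%:P * 'X^d) = f - PC p * G0.
    by rewrite {1}le polyCM; ring.
  exact: HG0.
have cop : coprimez l p%:Z.
  by rewrite coprimezE coprime_sym prime_coprime.
case/coprimezP: cop => [[u v] /= E].
exists ('X^d + u%:P * (f - l%:P * 'X^d)), (v%:P * 'X^d + u%:P * G0); split.
  apply/monicP; rewrite lead_coefDl ?lead_coefXn // size_polyXn ltnS.
  apply/leq_sizeP => j hj; rewrite coefCM.
  by move/leq_sizeP: szl => ->; rewrite ?mulr0.
have -> : 'X^d + u%:P * (f - l%:P * 'X^d) - PC p * (v%:P * 'X^d + u%:P * G0) =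
   u%:P * (f - PC p * G0) + ((1 - (u * l + v * p%:Z))%:P) * 'X^d.
  by rewrite polyCB polyCD !polyCM; ring.
by rewrite E subrr mul0r addr0; apply: JM.
Qed.

Lemma L3 J : is_ideal J -> forall n, (0 < n)%N ->
  (forall p, prime p -> (p %| n)%N -> exists F G, F \is monic /\ J (F - PC p * G)) ->
  exists F G, F \is monic /\ J (F - PC n * G).
Proof.
move=> [J0 JD JM]; elim/ltn_ind => n IH n0 Hp.
case: (ltnP 1 n) => n1; last first.
  have -> : n = 1%N by apply/anti_leq; rewrite n1.
  by exists 1, 1; rewrite monic1 mulr1 subrr.
have pp := pdiv_prime n1; have pd := pdiv_dvd n.
set p := pdiv n in pp pd.
set m := (n %/ p)%N.
have nE : n = (p * m)%N by rewrite /m mulnC divnK.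
have m0 : (0 < m)%N by move: n0; rewrite nE muln_gt0 => /andP[].
have mlt : (m < n)%N by rewrite /m ltn_Pdiv // prime_gt1.
have [F1 [G1 [mF1 J1]]] := Hp p pp pd.
have [F2 [G2 [mF2 J2]]] : exists F G, F \is monic /\ J (F - PC m * G).
  apply: IH => // q qp qd; apply: Hp => //; apply: dvdn_trans qd _.
  by rewrite nE dvdn_mull.
exists (F1 * F2), (G1 * G2); split; first by rewrite monicMl.
have -> : F1 * F2 - PC n * (G1 * G2) = F2 * (F1 - PC p * G1) + (PC p * G1) * (F2 - PC m * G2).
  by rewrite nE PoszM polyCM; ring.
by apply: JD; apply: JM.
Qed.

Lemma notdiv_coef (p : nat) (x : {poly int}) :
  ~ (exists q, x = PC p * q) -> exists i, ~~ (p%:Z %| x`_i)%Z.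
Proof.
move=> H; apply: NNPP => H2; apply: H.
exists (\poly_(i < size x) (x`_i %/ p%:Z)%Z); apply/polyP => i.
rewrite coefCM coef_poly; case: ltnP => hi; last by rewrite mulr0 nth_default.
have : (p%:Z %| x`_i)%Z by apply: NNPP => h; apply: H2; exists i; apply/negP.
by move=> /divzK E; rewrite mulrC E.
Qed.

Lemma L4 : forall c, (0 < c)%N -> forall J, is_ideal J -> J (PC c) ->
  exists (g : int) (c' : nat) (F : {poly int}), [/\ (0 < c')%N, F \is monic,
     (forall x, J x -> exists r, x = g%:P * r), J (g%:P * PC c') & J (g%:P * F)].
Proof.
elim/ltn_ind => c IH c0 J [J0 JD JM] Jc.
case: (classic (exists p, [/\ prime p, (p %| c)%N & forall x, J x -> exists q, x = PC p * q])).
  move=> [p [pp pc Hdiv]].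
  pose J' x := J (PC p * x).
  have iJ' : is_ideal J'.
    split; rewrite /J'; first by rewrite mulr0.
      by move=> x y hx hy; rewrite mulrDr; apply: JD.
    by move=> a x hx; rewrite mulrCA; apply: JM.
  set c1 := (c %/ p)%N.
  have cE : c = (p * c1)%N by rewrite /c1 mulnC divnK.
  have c10 : (0 < c1)%N by move: c0; rewrite cE muln_gt0 => /andP[].
  have clt : (c1 < c)%N by rewrite /c1 ltn_Pdiv // prime_gt1.
  have Jc1 : J' (PC c1) by rewrite /J' -polyCM -PoszM -cE.
  have [g [c' [F [c'0 mF HJ' Jc' JF]]]] := IH c1 clt c10 J' iJ' Jc1.
  exists (p%:Z * g), c', F; split => //.
  - move=> x /[dup] Jx /Hdiv [q xE].
    have : J' q by rewrite /J' -xE.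
    move=> /HJ' [r qE]; exists r; by rewrite xE qE polyCM mulrA.
  - by rewrite polyCM -mulrA.
  - by rewrite polyCM -mulrA.
move=> Hn.
have HL : forall p, prime p -> (p %| c)%N -> exists F G, F \is monic /\ J (F - PC p * G).
  move=> p pp pc.
  have [x [Jx nd]] : exists x, J x /\ ~ (exists q, x = PC p * q).
    apply: NNPP => H; apply: Hn; exists p; split => // x Jx.
    by apply: NNPP => H2; apply: H; exists x.
  apply: (L1 _ pp (notdiv_coef nd)) => //.
  by exists 0; rewrite mulr0 subr0.
have [F [G [mF JF]]] := L3 (And3 J0 JD JM) c0 HL.
exists 1, c, F; split => //.
- by move=> x Jx; exists x; rewrite mul1r.
- by rewrite mul1r.
- rewrite mul1r.
  have -> : F = (F - PC c * G) + G * PC c by ring.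
  by apply: JD => //; apply: JM.
Qed.
Lemma integral (h0 : {poly rat}) (B : {poly int}) (a m : nat) : (0 < m)%N ->
  iota_ ('X^a * ('X^m - 1)) * h0 = iota_ B -> exists h, h0 = iota_ h.
Proof.
rewrite rmorphM rmorphB /= !map_polyXn rmorph1 -mulrA => m0 E.
have key : forall k, exists z : int, h0`_k = z%:~R.
  elim/ltn_ind => k IH.
  have := congr1 (fun q : {poly rat} => q`_(k + a)) E.
  rewrite /= coefXnM ltnNge leq_addl /= addnK coef_map /= mulrBl coefB mul1r coefXnM.
  case: ltnP => hk.
    by move=> E2; exists (- B`_(k + a)); rewrite rmorphN /= -E2 sub0r opprK.
  have lt : (k - m < k)%N by rewrite ltn_subrL m0 /=; apply: leq_trans hk.
  have [z hz] := IH (k - m)%N lt.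
  move=> E2; exists (z - B`_(k + a)); rewrite rmorphB /= -E2 -hz; ring.
exists (\poly_(i < size h0) numq h0`_i); apply/polyP => i.
rewrite coef_map coef_poly /=; case: ltnP => hi; last by rewrite nth_default.
by have [z ->] := key i; rewrite numq_int.
Qed.

Lemma ccore (g p : {poly rat}) (n : int) (a m : nat) (A B : {poly int}) :
  n != 0 -> (0 < m)%N ->
  zact n%:P p = zact A g -> zact ('X^a * ('X^m - 1)) p = zact B g ->
  exists h, p = zact h g.
Proof.
rewrite /zact map_polyC /= => n0 m0 E1 E2.
have nR : (n%:~R : rat) != 0 by rewrite intr_eq0.
have nV : ((n%:~R : rat)^-1)%:P * (n%:~R)%:P = 1 :> {poly rat} by rewrite -polyCM mulVf.
case: (eqVneq g 0) => [g0 | g0].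
  exists 0; rewrite g0 mulr0.
  move: E1; rewrite g0 mulr0 => /(congr1 (fun q => (n%:~R^-1)%:P * q)).
  by rewrite mulr0 mulrA nV mul1r.
set Q := iota_ ('X^a * ('X^m - 1)) in E2 *.
pose h0 := ((n%:~R : rat)^-1)%:P * iota_ A.
have hQ : Q * h0 = iota_ B.
  apply: (mulIf g0); rewrite -E2.
  have -> : Q * h0 * g = Q * (n%:~R^-1)%:P * (iota_ A * g) by rewrite /h0; ring.
  rewrite -E1.
  have -> : Q * (n%:~R^-1)%:P * ((n%:~R)%:P * p) = Q * ((n%:~R^-1)%:P * (n%:~R)%:P) * p by ring.
  by rewrite nV mulr1.
have [h hE] := integral m0 hQ.
exists h; rewrite -hE /h0.
have -> : (n%:~R^-1)%:P * iota_ A * g = (n%:~R^-1)%:P * (iota_ A * g) by ring.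
by rewrite -E1 mulrA nV mul1r.
Qed.

Lemma msub M x y : is_zsubmodule M -> M x -> M y -> M (x - y).
Proof.
move=> [M0 MD MZ] hx hy; apply: MD => //.
have := MZ (-1) y hy; by rewrite /zact rmorphN rmorph1 mulN1r.
Qed.

Lemma pigeon (M N : {poly rat} -> Prop) (r : seq {poly rat}) (v : nat -> {poly rat}) :
  is_zsubmodule M -> (forall n, N n -> exists2 x, x \in r & M (n - x)) ->
  (forall i, N (v i)) -> exists i j, (i < j)%N /\ M (v j - v i).
Proof.
move=> sM H Nv.
have hf : forall i, {x | x \in r /\ M (v i - x)}.
  move=> i; apply: constructive_indefinite_description.
  by have [x ? ?] := H (v i) (Nv i); exists x.
pose f i := sval (hf i).
have : ~~ uniq (map f (iota 0 (size r).+1)).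
  apply/negP => U.
  have sub : {subset map f (iota 0 (size r).+1) <= r}.
    by move=> x /mapP [i _ ->]; rewrite /f; case: (hf i) => y [].
  by have := uniq_leq_size U sub; rewrite size_map size_iota ltnn.
case/(uniqPn 0) => i [j [lij]]; rewrite size_map size_iota => ljs.
rewrite !(nth_map 0%N) ?size_iota ?(ltn_trans lij) // !nth_iota ?(ltn_trans lij) // !add0n => E.
exists i, j; split => //.
have -> : v j - v i = (v j - f j) - (v i - f i) by rewrite E; ring.
apply: msub => //.
  by rewrite /f; case: (hf j) => y [].
by rewrite /f; case: (hf i) => y [].
Qed.

Lemma zactM a b x : zact a (zact b x) = zact (a * b) x.
Proof. by rewrite /zact rmorphM mulrA. Qed.
Lemma zactD a b x : zact a x + zact b x = zact (a + b) x.
Proof. by rewrite /zact rmorphD mulrDl. Qed.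
Lemma zactB a b x : zact a x - zact b x = zact (a - b) x.
Proof. by rewrite /zact rmorphB mulrBl. Qed.

Lemma fq M g c F : is_zsubmodule M -> (0 < c)%N -> F \is monic ->
  M (zact (PC c) g) -> M (zact F g) ->
  finite_quotient M (fun x => exists b, x = zact b g).
Proof.
move=> [M0 MD MZ]; case: c => // c _ mF Mc MF.
set k := (size F).-1.
exists [seq zact (\sum_(i < k) (((t i : nat)%:Z)%:P * 'X^i)) g | t : {ffun 'I_k -> 'I_c.+1}].
move=> n [b ->].
set R0 := Pdiv.Ring.rmodp b F.
set Q := Pdiv.Ring.rdivp b F.
have bE : b = Q * F + R0 := Pdiv.RingMonic.rdivp_eq mF b.
have F0 : F != 0 by apply: monic_neq0.
have szR : (size R0 <= k)%N.
  have := Pdiv.Ring.ltn_rmodpN0 b F0; rewrite -/R0 /k.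
  by case: (size F).
have bnd : forall i, (absz (R0`_i %% (c.+1)%:Z)%Z < c.+1)%N.
  move=> i; have h1 := @modz_ge0 R0`_i (c.+1)%:Z isT.
  have h2 := @ltz_pmod R0`_i (c.+1)%:Z isT.
  lia.
pose t := [ffun i : 'I_k => (inord (absz (R0`_i %% (c.+1)%:Z)%Z) : 'I_c.+1)].
pose R2 := \poly_(i < k) (R0`_i %% (c.+1)%:Z)%Z.
pose R1 := \poly_(i < k) (R0`_i %/ (c.+1)%:Z)%Z.
have RE : R0 = PC c.+1 * R1 + R2.
  apply/polyP => i; rewrite coefD coefCM !coef_poly; case: ltnP => hi.
    by rewrite mulrC -divz_eq.
  by rewrite mulr0 addr0 nth_default // (leq_trans szR).
exists (zact R2 g).
  apply/mapP; exists t; rewrite ?mem_enum //; congr zact.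
  rewrite /R2 poly_def; apply: eq_bigr => i _.
  by rewrite mul_polyC /t ffunE inordK // abszE ger0_norm ?modz_ge0.
rewrite zactB.
have -> : b - R2 = Q * F + R1 * PC c.+1 by rewrite {1}bE RE; ring.
rewrite -zactD -!zactM.
by apply: MD; apply: MZ.
Qed.

Lemma frame M (g : {poly rat}) (c : nat) (F : {poly int}) :
  is_zsubmodule M -> (0 < c)%N -> F \is monic ->
  (forall m, M m -> exists r, m = zact r g) -> M (zact (PC c) g) -> M (zact F g) ->
  zcyclic (saturation M).
Proof.
move=> sM c0 mF HA Hc HF; exists g => p; split.
  move=> [N [[N0 ND NZ] MN [r Hr] Np]].
  have [i [j [lij Mij]]] := pigeon (v := fun i => zact (PC i) p) sM Hr (fun i => NZ _ _ Np).
  have [a [b [lab Mab]]] := pigeon (v := fun i => zact ('X^i) p) sM Hr (fun i => NZ _ _ Np).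
  move: Mij; rewrite zactB -polyCB => /HA [A EA].
  move: Mab; rewrite zactB => /HA [B EB].
  have XE : ('X^b - 'X^a : {poly int}) = 'X^a * ('X^(b - a) - 1).
    by rewrite mulrBr mulr1 -exprD subnKC // ltnW.
  rewrite XE in EB.
  apply: (ccore _ _ EA EB).
    by rewrite subr_eq0 eqz_nat neq_ltn lij orbT.
  by rewrite subn_gt0.
move=> [a ->].
exists (fun x => exists b, x = zact b g); split.
- split.
  + by exists 0; rewrite /zact rmorph0 mul0r.
  + by move=> x y [b1 ->] [b2 ->]; exists (b1 + b2); rewrite zactD.
  + by move=> a' x [b ->]; exists (a' * b); rewrite zactM.
- exact: HA.
- exact: (fq sM c0 mF Hc HF).
- by exists a.
Qed.
Lemma gcd_comb (s : seq {poly rat}) : exists G, (forall i, (i < size s)%N -> G %| s`_i) /\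
  exists u : 'I_(size s) -> {poly rat}, G = \sum_(i < size s) u i * s`_i.
Proof.
elim: s => [|x s [G' [Gd [u' Gu]]]].
  by exists 0; split => //; exists (fun _ => 0); rewrite big_ord0.
pose e := egcdp x G'.
exists (e.1 * x + e.2 * G'); split.
  have dG : e.1 * x + e.2 * G' %| gcdp x G'.
    have h : gcdp x G' %= e.1 * x + e.2 * G' := egcdpE x G'; rewrite eqp_sym in h.
    by rewrite (eqp_dvdl _ h) dvdpp.
  case => [|i] /= hi; first by apply: dvdp_trans dG (dvdp_gcdl _ _).
  by apply: dvdp_trans dG (dvdp_trans (dvdp_gcdr _ _) (Gd i hi)).
exists (fun i : 'I_(size s).+1 => if unlift ord0 i is Some j then e.2 * u' j else e.1).
rewrite big_ord_recl /= unlift_none; congr (_ + _).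
rewrite Gu mulr_sumr; apply: eq_bigr => i _.
by rewrite liftK mulrA.
Qed.

Lemma natPC (d : nat) : ((d%:R : rat)%:P) = iota_ (PC d).
Proof. by rewrite map_polyC /= -pmulrn. Qed.

Lemma clear1 (q : {poly rat}) : exists d : nat, (0 < d)%N /\ exists a : {poly int}, (d%:R)%:P * q = iota_ a.
Proof.
elim/poly_ind: q => [|q c [d [d0 [a E]]]].
  by exists 1%N; split => //; exists 0; rewrite mulr0 rmorph0.
have de : ((absz (denq c))%:Z) = denq c by rewrite abszE gtr0_norm // denq_gt0.
exists (d * absz (denq c))%N; split.
  by rewrite muln_gt0 d0 /= absz_gt0 denq_neq0.
exists ((absz (denq c))%:Z%:P * a * 'X + ((d%:Z) * numq c)%:P).
rewrite rmorphD rmorphM rmorphM /= map_polyX !map_polyC /= -E de intrM numqE.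
rewrite natrM !pmulrn abszE gtr0_norm ?denq_gt0 // !polyCM; ring.
Qed.

Lemma clearF n (f : 'I_n -> {poly rat}) : exists d : nat, (0 < d)%N /\
  exists a : 'I_n -> {poly int}, forall i, (d%:R)%:P * f i = iota_ (a i).
Proof.
elim: n f => [|n IH] f.
  by exists 1%N; split => //; exists (fun _ => 0); case.
have [d1 [d10 [a1 E1]]] := IH (fun i => f (lift ord0 i)).
have [d0 [d00 [a0 E0]]] := clear1 (f ord0).
exists (d0 * d1)%N; split; first by rewrite muln_gt0 d00 d10.
exists (fun i => if unlift ord0 i is Some j then PC d0 * a1 j else PC d1 * a0).
move=> i; case: unliftP => [j ->|->].
  by rewrite natrM polyCM -mulrA E1 rmorphM /= -natPC.
by rewrite mulnC natrM polyCM -mulrA E0 rmorphM /= -natPC.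
Qed.

Theorem lemma7p6 (M : {poly rat} -> Prop) :
  is_zsubmodule M -> zfinitely_generated M -> zcyclic (saturation M).
Proof.
move=> sM [s Hs]; have [M0 MD MZ] := sM.
have [G [Gd [u Gu]]] := gcd_comb s.
have [D [D0 [a Ea]]] := clearF u.
have MDG : M ((D%:R)%:P * G).
  apply/Hs; exists a; rewrite Gu mulr_sumr; apply: eq_bigr => i _.
  by rewrite /zact mulrA Ea.
pose t := fun i : 'I_(size s) => s`_i %/ G.
have sE : forall i : 'I_(size s), s`_i = t i * G by move=> i; rewrite divpK // Gd.
have [E [E0 [T ET]]] := clearF t.
have ER : (E%:R : rat) != 0 by rewrite pnatr_eq0 -lt0n.
have EV : ((E%:R : rat)^-1)%:P * (E%:R)%:P = 1 by rewrite -polyCM mulVf.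
pose H := G * ((E%:R : rat)^-1)%:P.
pose J := fun x => M (H * iota_ x).
have iJ : is_ideal J.
  split; rewrite /J.
  - by rewrite rmorph0 mulr0.
  - by move=> x y hx hy; rewrite rmorphD mulrDr; apply: MD.
  - by move=> b x hx; rewrite rmorphM mulrCA; apply: (MZ b _ hx).
have JDE : J (PC (D * E)).
  rewrite /J -natPC natrM polyCM /H.
  have -> : G * ((E%:R)^-1)%:P * ((D%:R)%:P * (E%:R)%:P) =
     (D%:R)%:P * G * (((E%:R)^-1)%:P * (E%:R)%:P) by ring.
  by rewrite EV mulr1.
have DE0 : (0 < D * E)%N by rewrite muln_gt0 D0 E0.
have [gam [c' [F [c'0 mF HJ Jc' JF]]]] := L4 DE0 iJ JDE.
apply: (@frame M (H * iota_ gam%:P) c' F sM c'0 mF).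
- move=> m /Hs [b ->].
  have eqS : H * iota_ (\sum_(i < size s) b i * T i) = \sum_(i < size s) zact (b i) s`_i.
    rewrite rmorph_sum mulr_sumr; apply: eq_bigr => i _.
    rewrite rmorphM /= -ET (sE i) /zact /H.
    have -> : G * ((E%:R)^-1)%:P * (iota_ (b i) * ((E%:R)%:P * t i)) =
       iota_ (b i) * (t i * G) * (((E%:R)^-1)%:P * (E%:R)%:P) by ring.
    by rewrite EV mulr1.
  have Jx : J (\sum_(i < size s) b i * T i) by rewrite /J eqS; apply/Hs; exists b.
  have [r rE] := HJ _ Jx.
  by exists r; rewrite -eqS rE rmorphM /zact; ring.
- move: Jc'; rewrite /J rmorphM /zact => h.
  by have -> : iota_ (PC c') * (H * iota_ gam%:P) = H * (iota_ gam%:P * iota_ (PC c')) by ring.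
- move: JF; rewrite /J rmorphM /zact => h.
  by have -> : iota_ F * (H * iota_ gam%:P) = H * (iota_ gam%:P * iota_ F) by ring.
Qed.
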